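(* Let $m$ be a positive integer, and let $A=\{a_s(n_s)\}_{s=1}^k$ with positive integers $n_s$ and integers $0\leqslant a_s<n_s$. Let $p$ be any prime with $p>|S(n_1,\ldots,n_k)|$. Then $A$ is an exact $m$-cover of $\mathbb Z$ (i.e., $|\{1\leqslant s\leqslant k: x\equiv a_s\pmod{n_s}\}|=m$ for every $x\in\mathbb Z$) if and only if $$\sum_{s=1}^k\frac{e^{2\pi i a_s/p}}{1-e^{2\pi i n_s/p}}=\frac{m}{1-e^{2\pi i/p}}.$$
   Context: For a positive integer $n$ and $a\in\{0,\ldots,n-1\}$, $a(n)$ denotes the residue class $\{x\in\mathbb Z: x\equiv a \pmod n\}$. For positive integers $n_1,\ldots,n_k$, $S(n_1,\ldots,n_k)=\{r/n_s: r=0,\ldots,n_s-1;\ s=1,\ldots,k\}$, a set of rational numbers, and $|S(\cdot)|$ denotes its cardinality. *)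

(* Defs.v *)
From mathcomp Require Import all_boot all_order all_algebra.
From mathcomp Require Import complex.
From mathcomp Require Import all_classical all_reals all_analysis.
Set Implicit Arguments. Unset Strict Implicit. Unset Printing Implicit Defensive.
Import Order.TTheory GRing.Theory Num.Theory.
Local Open Scope ring_scope.

Definition exact_m_cover (k : nat) (n a : 'I_k -> nat) (m : nat) : Prop :=
  forall x : int,
    #|[set s : 'I_k | (x == (a s)%:Z %[mod (n s)%:Z])%Z]| = m.

Definition S_set (k : nat) (n : 'I_k -> nat) : seq rat :=
  undup [seq (r%:R / (n s)%:R : rat) | s <- enum 'I_k, r <- iota 0 (n s)].

Definition card_S (k : nat) (n : 'I_k -> nat) : nat := size (S_set n).

Definition unit_exp (R : realType) (p j : nat) : R[i] :=
  let t : R := 2 * pi * j%:R / p%:R in (cos t +i* sin t)%C.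
Arguments unit_exp : clear implicits.

(* Main.v *)
Require Import Defs.
From mathcomp Require Import all_boot all_order all_algebra.
From mathcomp Require Import complex.
From mathcomp Require Import all_classical all_reals all_analysis.
From mathcomp Require Import algC cyclotomic.
From mathcomp Require Import ring lra zify.
Import Order.TTheory GRing.Theory Num.Theory.
Local Open Scope ring_scope.
Section Trig.
Variable R : realType.
Definition ex (t : R) : R[i] := Complex (cos t) (sin t).
Lemma exD a b : ex (a + b) = ex a * ex b.
Proof. rewrite /ex cosD sinD. apply/eqP; rewrite eq_complex /=. apply/andP; split; apply/eqP; ring. Qed.
Lemma ex0 : ex 0 = 1.
Proof. by rewrite /ex cos0 sin0. Qed.
Lemma exMn a j : ex (a *+ j) = ex a ^+ j.
Proof. elim: j => [|j IH]; first by rewrite mulr0n ex0. by rewrite mulrS exD IH exprS. Qed.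
Lemma ex2pi : ex (pi *+ 2) = 1.
Proof. by rewrite /ex cos2pi sin2pi. Qed.
Lemma ex_neq1 t : 0 < t < pi *+ 2 -> ex t != 1.
Proof.
move=> /andP[t0 t2]; rewrite /ex; apply/negP => /eqP/eqP; rewrite eq_complex /= => /andP[/eqP c1 /eqP s0].
have [tp|pt|tp] := ltgtP t pi.
- by move: (sin_gt0_pi (x:=t)); rewrite t0 tp s0 ltxx => /(_ isT).
- have h : 0 < t - pi < pi by apply/andP; split; [rewrite subr_gt0 | rewrite ltrBlDr -mulr2n].
  have := sin_gt0_pi h. have := sinDpi (t - pi); rewrite subrK s0 => /eqP.
  rewrite eq_sym oppr_eq0 => /eqP ->. by rewrite ltxx.
- by move: c1; rewrite tp cospi => /eqP; rewrite -subr_eq0 -opprD oppr_eq0 (_ : 1 + 1 = 2%:R :> R) // pnatr_eq0.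
Qed.
Lemma unit_expE n j : unit_exp R n j = ex (2 * pi / n%:R) ^+ j.
Proof. rewrite -exMn /unit_exp /ex; congr (Complex (cos _) (sin _)); rewrite -mulr_natr; ring. Qed.
Lemma unit_exp_prim n : (0 < n)%N -> n.-primitive_root (unit_exp R n 1).
Proof.
move=> n0; apply/andP; split => //; apply/forallP => i; rewrite unity_rootE.
rewrite unit_expE expr1 -exMn.
have n0' : 0 < n%:R :> R by rewrite ltr0n.
have [e|ne] := eqVneq i.+1 n.
  rewrite e.
  have h2 : 2 * pi = pi *+ 2 :> R by rewrite mulr2n; ring.
  have -> : 2 * pi / n%:R *+ n = pi *+ 2 :> R by rewrite -mulr_natr divfK ?h2 // gt_eqF.
  by rewrite ex2pi eqxx.
apply/eqP/negbTE/ex_neq1; apply/andP; split.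
  by rewrite mulrn_wgt0 // divr_gt0 // mulr_gt0 // pi_gt0.
have h2 : 2 * pi = pi *+ 2 :> R by rewrite mulr2n; ring.
rewrite -[_ *+ i.+1]mulr_natr mulrAC ltr_pdivrMr // -h2.
rewrite ltr_pM2l ?ltr_nat; first by have := ltn_ord i; lia.
by rewrite mulr_gt0 // pi_gt0.
Qed.
End Trig.
Section Galois.
Variable p : nat.
Hypothesis pp : prime p.
Definition Phi : {poly rat} := \poly_(i < p) 1.

Lemma size_Phi : size Phi = p.
Proof. by rewrite size_poly_eq // oner_neq0. Qed.

Lemma Phi_neq0 : Phi != 0.
Proof. by rewrite -size_poly_eq0 size_Phi -lt0n prime_gt0. Qed.

Lemma horner_Phi (F : numFieldType) (x : F) : (map_poly ratr Phi).[x] = \sum_(i < p) x ^+ i.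
Proof.
rewrite horner_coef size_map_poly size_Phi; apply: eq_bigr => i _.
by rewrite coef_map coef_poly ltn_ord /= (ratr_nat _ 1) mul1r.
Qed.

Lemma Phi_root (F : numFieldType) (x : F) : x ^+ p = 1 -> x != 1 -> \sum_(i < p) x ^+ i = 0.
Proof.
move=> xp x1; have := subrX1 x p; rewrite xp subrr => /esym/eqP.
by rewrite mulf_eq0 subr_eq0 (negPf x1) => /eqP.
Qed.

Lemma prime_prim (F : idomainType) (x : F) : x ^+ p = 1 -> x != 1 -> p.-primitive_root x.
Proof.
move=> xp x1; have [m pm mdp] := prim_order_exists (prime_gt0 pp) xp.
have [m1|<-//] : m = 1%N \/ m = p.
  by case/primeP: pp => _ H; move/H: mdp => /orP[]/eqP; auto.
by move: pm; rewrite m1 => /prim_expr_order; rewrite expr1 => x11; rewrite x11 eqxx in x1.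
Qed.

Lemma Phi_dvd (K : numFieldType) (z : K) (q : {poly rat}) :
  p.-primitive_root z -> root (map_poly ratr q) z -> Phi %| q.
Proof.
move=> pz qz.
have z1 : z != 1.
  apply/negP => /eqP z1; have := prim_order_dvd pz 1; rewrite expr1 z1 eqxx dvdn1.
  by move=> p1; move: (prime_gt1 pp); rewrite (eqP p1).
have Phiz : root (map_poly ratr Phi) z.
  by rewrite /root horner_Phi Phi_root // prim_expr_order.
have [cop|ncop] := boolP (coprimep q Phi).
  exfalso; move/Bezout_coprimepP: cop => [[u v] /= /eqp_size].
  set w := _ + _ => sw; rewrite size_poly1 in sw.
  have wE : w = (w`_0)%:P by apply: size1_polyC; rewrite sw.
  have w0 : w`_0 != 0 by apply/eqP => w0; move: sw; rewrite wE w0 size_poly0.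
  have : (map_poly (ratr : rat -> K) w).[z] = 0.
    rewrite /w rmorphD !rmorphM /= hornerD !hornerM.
    by rewrite (rootP qz) (rootP Phiz) !mulr0 addr0.
  by rewrite wE map_polyC hornerC /= => /eqP; rewrite fmorph_eq0 (negPf w0).
set d := gcdp q Phi.
have dPhi : d %| Phi by apply: dvdp_gcdr.
have d0 : d != 0 by rewrite gcdp_eq0 negb_and Phi_neq0 orbT.
have sd1 : size (map_poly (ratr : rat -> algC) d) != 1%N by rewrite size_map_poly.
have [w wr] := closed_rootP _ sd1.
have wPhi : root (map_poly (ratr : rat -> algC) Phi) w.
  have [r ->] := dvdpP _ _ dPhi; by rewrite rmorphM rootM wr orbT.
move: wPhi; rewrite /root horner_Phi => /eqP wsum.
have w1 : w != 1.
  apply/negP => /eqP w1; move: wsum; rewrite w1.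
  under eq_bigr do rewrite expr1n.
  by rewrite sumr_const card_ord => /eqP; rewrite pnatr_eq0 => /eqP p0; move: (prime_gt0 pp); rewrite p0.
have wp : w ^+ p = 1 by apply/eqP; rewrite -subr_eq0 subrX1 wsum mulr0.
have pw := @prime_prim _ w wp w1.
have [pf [Dpf _] dv] := minCpolyP w.
have pfd : pf %| d by rewrite -dv.
have spf : size pf = p.
  have : size (minCpoly w) = size (map_poly (ratr : rat -> algC) pf) by rewrite Dpf.
  rewrite (minCpoly_cyclotomic pw) size_cyclotomic totient_prime //.
  by rewrite size_map_poly prednK ?prime_gt0.
have sdP : size d = size Phi.
  apply/eqP; rewrite eqn_leq dvdp_leq ?Phi_neq0 // size_Phi -{1}spf dvdp_leq //.
have : d %= Phi by rewrite -dvdp_size_eqp // sdP.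
by move/eqp_dvdl => <-; apply: dvdp_gcdl.
Qed.

Lemma conj_root (K : numFieldType) (z : K) (q : {poly rat}) j :
  p.-primitive_root z -> root (map_poly ratr q) z -> coprime j p ->
  root (map_poly ratr q) (z ^+ j).
Proof.
move=> pz qz cj; have [r ->] := dvdpP _ _ (@Phi_dvd _ _ _ pz qz).
rewrite rmorphM rootM; apply/orP; right.
have pzj : p.-primitive_root (z ^+ j) by rewrite prim_root_exp_coprime.
have zj1 : z ^+ j != 1.
  apply/negP => /eqP z1; have := prim_order_dvd pzj 1; rewrite expr1 z1 eqxx dvdn1.
  by move=> p1; move: (prime_gt1 pp); rewrite (eqP p1).
by rewrite /root horner_Phi Phi_root // prim_expr_order.
Qed.

End Galois.
Definition cnt k (n a : 'I_k -> nat) (x : nat) : nat := #|[set s : 'I_k | (x %% n s == a s)%N]|.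
Arguments cnt {k}.

Lemma geo_mod (F : comRingType) n a q (z : F) : (a < n)%N ->
  \sum_(x < n * q) (x %% n == a)%N%:R * z ^+ x = \sum_(t < q) z ^+ (a + n * t).
Proof.
move=> an; elim: q => [|q IH]; first by rewrite muln0 !big_ord0.
rewrite mulnSr big_split_ord /= IH big_ord_recr /=; congr (_ + _).
rewrite (bigD1 (Ordinal an)) //= big1 => [|i /= ia].
  by rewrite mulnC modnMDl modn_small // eqxx mul1r addr0 addnC.
rewrite mulnC modnMDl modn_small //; case: eqP => [e|]; last by rewrite mul0r.
by move: ia; rewrite -val_eqE /= e eqxx.
Qed.

Lemma key (F : fieldType) k (n a : 'I_k -> nat) L (z : F) :
  (forall s, a s < n s)%N -> (forall s, n s %| L)%N -> (forall s, z ^+ n s != 1) ->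
  (1 - z ^+ L) * \sum_(s < k) z ^+ a s / (1 - z ^+ n s)
    = \sum_(x < L) (cnt n a x)%:R * z ^+ x.
Proof.
move=> an nL zn.
have -> : \sum_(x < L) (cnt n a x)%:R * z ^+ x =
   \sum_(x < L) \sum_(s < k) (x %% n s == a s)%N%:R * z ^+ x.
  apply: eq_bigr => x _; rewrite -mulr_suml; congr (_ * _).
  rewrite /cnt -sum1_card natr_sum big_mkcond /=; apply: eq_bigr => s _.
  by rewrite inE; case: eqP.
rewrite exchange_big mulr_sumr; apply: eq_bigr => s _ /=.
have [q Lq] := dvdnP (nL s); rewrite Lq mulnC geo_mod //.
have zn1 : 1 - z ^+ n s != 0 by rewrite subr_eq0 eq_sym.
have geo : 1 - z ^+ (n s * q) = (1 - z ^+ n s) * \sum_(t < q) (z ^+ n s) ^+ t.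
  by rewrite exprM -opprB subrX1 -mulNr opprB.
rewrite geo mulrC mulrA divfK // mulr_sumr; apply: eq_bigr => t _.
by rewrite -exprM exprD.
Qed.

Lemma key1 (F : fieldType) L (z : F) m : z != 1 ->
  (1 - z ^+ L) * (m%:R / (1 - z)) = \sum_(x < L) m%:R * z ^+ x.
Proof.
move=> z1; have z0 : 1 - z != 0 by rewrite subr_eq0 eq_sym.
rewrite -opprB subrX1 -mulNr opprB -mulr_sumr.
by field.
Qed.

Lemma cover_iff k (n a : 'I_k -> nat) m L : (forall s, a s < n s)%N -> (0 < L)%N ->
  (forall s, n s %| L)%N ->
  exact_m_cover n a m <-> (forall x, (x < L)%N -> cnt n a x = m).
Proof.
move=> an L0 nL.
have cntE (x : nat) : [set s | (x%:Z == (a s)%:Z %[mod (n s)%:Z])%Z] = [set s | (x %% n s == a s)%N].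
  by apply/setP => s; rewrite !inE !modz_nat (modn_small (an s)).
split.
  by move=> H x xL; rewrite /cnt -cntE; apply: H.
move=> H x; set y := (x %% L%:Z)%Z.
have y0 : 0 <= y by rewrite modz_ge0 // lt0n_neq0.
have yL : y < L%:Z by rewrite ltz_pmod.
have yE : y = (`|y|%N)%:Z by rewrite gez0_abs.
rewrite -(H `|y|%N); last by rewrite -ltz_nat -yE.
rewrite /cnt; apply: eq_card => s; rewrite !inE.
have [c Lc] := dvdnP (nL s).
have xE : x = ((x %/ L%:Z)%Z * c%:Z) * (n s)%:Z + y by rewrite -mulrA -PoszM -Lc -divz_eq.
have : (x == (a s)%:Z %[mod (n s)%:Z])%Z = (y == (a s)%:Z %[mod (n s)%:Z])%Z.
  by rewrite {1}xE modzMDl.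
move=> ->; rewrite yE !modz_nat (modn_small (an s)) //.
Qed.
Lemma size_undup_map_le (T U V : eqType) (f : T -> U) (g : T -> V) (l : seq T) :
  {in l &, forall x y, f x = f y -> g x = g y} ->
  (size (undup (map g l)) <= size (undup (map f l)))%N.
Proof.
elim: l => [//|x l IH] H /=.
have IH2 : (size (undup [seq g i | i <- l]) <= size (undup [seq f i | i <- l]))%N.
  by apply: IH => u v ul vl; apply: H; rewrite inE ?ul ?vl orbT.
case: ifP => gx; case: ifP => fx //=; try by [apply: leqW].
exfalso; move/negbT: gx => /negP; apply; move/mapP: fx => [y yl fy].
apply/mapP; exists y => //; apply: H; rewrite ?inE ?yl ?eqxx ?orbT //.
Qed.

Section SS.
Variables (k : nat) (n : 'I_k -> nat).
Hypothesis npos : forall s, (0 < n s)%N.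

Definition pairs := [seq (s, r) | s <- enum 'I_k, r <- iota 0 (n s)].

Lemma S_setE : S_set n = undup (map (fun x => ((x.2)%:R / (n x.1)%:R : rat)) pairs).
Proof. by rewrite /S_set /pairs map_allpairs. Qed.

Lemma n_le_card s : (n s <= card_S n)%N.
Proof.
have -> : n s = size [seq (r%:R / (n s)%:R : rat) | r <- iota 0 (n s)] by rewrite size_map size_iota.
apply: uniq_leq_size.
  rewrite map_inj_in_uniq ?iota_uniq // => r r' _ _ /eqP.
  rewrite eqr_div ?pnatr_eq0 -?lt0n // -!natrM eqr_nat eqn_pmul2r // => /eqP //.
move=> x /mapP[r rin ->]; rewrite /S_set mem_undup.
by apply: (allpairs_f_dep (fun s r => (r%:R / (n s)%:R : rat))); rewrite ?mem_enum.
Qed.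

Variable L : nat.
Hypothesis L0 : (0 < L)%N.
Hypothesis nL : forall s, (n s %| L)%N.

Definition Tset := undup [seq (r * (L %/ n s))%N | s <- enum 'I_k, r <- iota 0 (n s)].

Lemma size_T : (size Tset <= card_S n)%N.
Proof.
rewrite /card_S S_setE /Tset.
have -> : [seq (r * (L %/ n s))%N | s <- enum 'I_k, r <- iota 0 (n s)] =
   map (fun x => (x.2 * (L %/ n x.1))%N) pairs by rewrite /pairs map_allpairs.
apply: size_undup_map_le => [[s r] [s' r']] _ _ /= /eqP.
rewrite eqr_div ?pnatr_eq0 -?lt0n // -!natrM eqr_nat => /eqP e.
have ns := npos s; have ns' := npos s'.
have c1 := divnK (nL s); have c2 := divnK (nL s').
have nn : (0 < n s * n s')%N by rewrite muln_gt0 ns ns'.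
apply/eqP; rewrite -(eqn_pmul2r nn); apply/eqP.
nia.
Qed.

Lemma T_lt u : u \in Tset -> (u < L)%N.
Proof.
rewrite mem_undup => /allpairsPdep[s [r [_ ]]]; rewrite mem_iota add0n => /andP[_ rn] ->.
have := divnK (nL s); have := npos s; nia.
Qed.

Lemma in_T s r : (r < n s)%N -> (r * (L %/ n s))%N \in Tset.
Proof.
move=> rn; rewrite mem_undup.
by apply: (allpairs_f_dep (fun s r => (r * (L %/ n s))%N)); rewrite ?mem_enum ?mem_iota.
Qed.

End SS.

Lemma horner_divp (F : fieldType) (h d : {poly F}) z : d %| h -> d.[z] != 0 ->
  (h %/ d).[z] = h.[z] / d.[z].
Proof. by move=> dh dz; rewrite -{2}(divpK dh) hornerM mulfK. Qed.

Lemma backward (F : numFieldType) k (n a : 'I_k -> nat) (m p : nat) (zeta w : F) L (s0 : 'I_k) :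
  prime p -> p.-primitive_root zeta -> L.-primitive_root w ->
  (forall s, 0 < n s)%N -> (forall s, a s < n s)%N -> (forall s, n s %| L)%N ->
  (size (Tset k n L) < p)%N ->
  (forall j, (0 < j < p)%N -> \sum_(s < k) (zeta ^+ j) ^+ a s / (1 - (zeta ^+ j) ^+ n s)
       = m%:R / (1 - zeta ^+ j)) ->
  forall x, (x < L)%N -> cnt n a x = m.
Proof.
move=> pp pz pw npos an nL Tp HF.
have L0 : (0 < L)%N := prim_order_gt0 pw.
set T := Tset k n L.
set rts := map (fun u => w ^+ u) T.
set h := \prod_(z <- rts) ('X - z%:P).
have Tlt := @T_lt k n npos L L0 nL.
have rts_uniq : uniq rts.
  rewrite map_inj_in_uniq ?undup_uniq // => u v uT vT /eqP.
  by rewrite (eq_prim_root_expr pw) !modn_small ?Tlt // => /eqP.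
have hsize : size h = (size T).+1 by rewrite size_prod_XsubC size_map.
have Xn_dvd s : ('X^(n s) - 1%:P) %| h.
  set rs := [seq w ^+ (r * (L %/ n s))%N | r <- iota 0 (n s)].
  have rlt r : (r < n s)%N -> (r * (L %/ n s) < L)%N.
    by move=> rn; have := divnK (nL s); have := npos s; nia.
  have rs_uniq : uniq rs.
    rewrite map_inj_in_uniq ?iota_uniq // => u v; rewrite !mem_iota !add0n => un vn /eqP.
    rewrite (eq_prim_root_expr pw) !modn_small ?rlt // => /eqP.
    by move=> e; have := divnK (nL s); have := npos s; nia.
  have d1 : \prod_(z <- rs) ('X - z%:P) %| h.
    apply: uniq_roots_dvdp; last by rewrite uniq_rootsE.
    apply/allP => z /mapP[r rin ->]; rewrite root_prod_XsubC; apply/mapP.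
    by exists (r * (L %/ n s))%N => //; apply: (@in_T k n L s r); rewrite mem_iota in rin.
  have d2 : \prod_(z <- rs) ('X - z%:P) %| 'X^(n s) - 1%:P.
    apply: uniq_roots_dvdp; last by rewrite uniq_rootsE.
    apply/allP => z /mapP[r rin ->]; rewrite /root hornerD hornerN hornerXn hornerC.
    by rewrite -exprM -mulnA divnK // mulnC exprM (prim_expr_order pw) expr1n subrr.
  have : \prod_(z <- rs) ('X - z%:P) %= 'X^(n s) - 1%:P.
    by rewrite -dvdp_size_eqp // size_prod_XsubC size_map size_iota size_XnsubC.
  by move/eqp_dvdl <-.
have hn0 : h != 0 by rewrite monic_neq0 // monic_prod_XsubC.
have X1_dvd : ('X - 1%:P) %| h.
  rewrite dvdp_XsubCl root_prod_XsubC; apply/mapP; exists 0%N; last by rewrite expr0.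
  by have := @in_T k n L s0 0 (npos s0); rewrite mul0n.
have Xn0 s : 'X^(n s) - 1%:P != 0 :> {poly F} by rewrite -size_poly_eq0 size_XnsubC.
have X10 : 'X - 1%:P != 0 :> {poly F} by rewrite polyXsubC_eq0.
have nT s : (n s <= size T)%N.
  have := dvdp_leq hn0 (Xn_dvd s); rewrite hsize size_XnsubC //.
set G := \sum_(s < k) 'X^(a s) * (h %/ ('X^(n s) - 1%:P)) - m%:R *: (h %/ ('X - 1%:P)).
have Gsize : (size G <= size T)%N.
  rewrite /G; apply: (leq_trans (size_polyD _ _)); rewrite geq_max size_polyN; apply/andP; split.
    apply: (big_ind (fun q : {poly F} => size q <= size T)%N) => //; first by rewrite size_poly0.
      by move=> x y hx hy; apply: (leq_trans (size_polyD _ _)); rewrite geq_max hx hy.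
    move=> s _; apply: (leq_trans (size_polyMleq _ _)); rewrite size_polyXn size_divp // hsize size_XnsubC //.
    have := an s; have := nT s; lia.
  apply: (leq_trans (size_scale_leq _ _)); rewrite size_divp // hsize size_XsubC; lia.
have Geval z : z != 1 -> (forall s, z ^+ n s != 1) ->
   G.[z] = - h.[z] * (\sum_(s < k) z ^+ a s / (1 - z ^+ n s) - m%:R / (1 - z)).
  move=> z1 zn.
  have term s : ('X^(a s) * (h %/ ('X^(n s) - 1%:P))).[z] = - h.[z] * (z ^+ a s / (1 - z ^+ n s)).
    have e1 : ('X^(n s) - 1%:P).[z] = z ^+ n s - 1 by rewrite hornerD hornerN hornerXn hornerC.
    have e2 : z ^+ n s - 1 != 0 by rewrite subr_eq0 zn.
    have e3 : 1 - z ^+ n s != 0 by rewrite subr_eq0 eq_sym zn.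
    by rewrite hornerM hornerXn (horner_divp _ _ _ _ (Xn_dvd s)) e1 //; field; rewrite e2 e3.
  rewrite /G hornerD hornerN hornerZ horner_sum (eq_bigr _ (fun s _ => term s)) -mulr_sumr.
  have e1 : ('X - 1%:P).[z] = z - 1 by rewrite hornerXsubC.
  have e2 : z - 1 != 0 by rewrite subr_eq0.
  have e3 : 1 - z != 0 by rewrite subr_eq0 eq_sym.
  by rewrite (horner_divp _ _ _ _ X1_dvd) e1 //; field; rewrite ?e2 ?e3.
have G0 : G = 0.
  apply/eqP; apply: contraT => Gn0.
  set rs := [seq zeta ^+ j | j <- iota 1 p.-1].
  have p1 := prime_gt1 pp.
  have rs_uniq : uniq rs.
    rewrite map_inj_in_uniq ?iota_uniq // => u v; rewrite !mem_iota => /andP[u1 up] /andP[v1 vp] /eqP.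
    rewrite (eq_prim_root_expr pz) !modn_small //; [by move/eqP|lia|lia].
  have rs_root : all (root G) rs.
    apply/allP => z /mapP[j]; rewrite mem_iota => /andP[j1 jp] ->.
    have j0 : (0 < j < p)%N by apply/andP; split; lia.
    have z1 : zeta ^+ j != 1.
      rewrite -(prim_order_dvd pz) gtnNdvd //; lia.
    have zn s : (zeta ^+ j) ^+ n s != 1.
      rewrite -exprM -(prim_order_dvd pz) Euclid_dvdM // !gtnNdvd //; try lia.
      exact: leq_ltn_trans (nT s) Tp.
    by rewrite /root Geval // HF // subrr mulr0.
  have := max_poly_roots Gn0 rs_root rs_uniq.
  rewrite size_map size_iota => H; have := leq_ltn_trans (leq_trans H Gsize) Tp; lia.
move=> x xL.
pose P := \poly_(y < L) ((cnt n a y)%:R - m%:R : F).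
have hz0 (i : nat) : h.[(i.+2)%:R] != 0.
  rewrite horner_prod prodf_seq_eq0; apply/hasPn => y /mapP[u uT ->] /=.
  rewrite hornerXsubC subr_eq0; apply/negP => /eqP e.
  have : ((i.+2)%:R : F) ^+ L = 1 by rewrite e -exprM mulnC exprM (prim_expr_order pw) expr1n.
  rewrite -natrX => /eqP; rewrite pnatr_eq1 => /eqP.
  have := expn_gt0 (i.+2) L.-1; rewrite -(prednK L0) expnS; nia.
have big (i N : nat) : (0 < N)%N -> ((i.+2)%:R : F) ^+ N != 1.
  move=> N0; rewrite -natrX pnatr_eq1; apply/eqP.
  have := expn_gt0 (i.+2) N.-1; rewrite -(prednK N0) expnS; nia.
have Pz (i : nat) : P.[(i.+2)%:R] = 0.
  set z : F := (i.+2)%:R.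
  have z1 : z != 1 by have := big i 1%N isT; rewrite expr1.
  have zn s : z ^+ n s != 1 := big i (n s) (npos s).
  have Fz : \sum_(s < k) z ^+ a s / (1 - z ^+ n s) - m%:R / (1 - z) = 0.
    have := Geval z z1 zn; rewrite G0 horner0 => /esym/eqP.
    by rewrite mulf_eq0 oppr_eq0 (negPf (hz0 i)) /= => /eqP.
  rewrite horner_poly; under eq_bigr do rewrite mulrBl.
  by rewrite sumrB -(key _ _ _ _ _ _ an nL zn) -(key1 _ L _ m z1) -mulrBr Fz mulr0.
have P0 : P = 0.
  apply/eqP; apply: contraT => Pn0.
  set rs := [seq ((i.+2)%:R : F) | i <- iota 0 L].
  have rs_uniq : uniq rs.
    by rewrite map_inj_uniq ?iota_uniq // => i j /eqP; rewrite eqr_nat !eqSS => /eqP.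
  have rs_root : all (root P) rs by apply/allP => z /mapP[i _ ->]; rewrite /root Pz.
  have := max_poly_roots Pn0 rs_root rs_uniq; rewrite size_map size_iota.
  by move=> H; move: (leq_trans H (size_poly L _)); rewrite ltnn.
have := congr1 (fun q : {poly F} => q`_x) P0; rewrite /= coef_poly xL coef0 => /eqP.
by rewrite subr_eq0 eqr_nat => /eqP.
Qed.

Lemma HF_lemma (K : numFieldType) k (n a : 'I_k -> nat) (m p : nat) (zeta : K) :
  prime p -> p.-primitive_root zeta -> (forall s, 0 < n s < p)%N ->
  \sum_(s < k) zeta ^+ a s / (1 - zeta ^+ n s) = m%:R / (1 - zeta) ->
  forall j, (0 < j < p)%N -> \sum_(s < k) (zeta ^+ j) ^+ a s / (1 - (zeta ^+ j) ^+ n s)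
       = m%:R / (1 - zeta ^+ j).
Proof.
move=> pp pz np H.
set Qr : {poly rat} := \sum_(s < k) 'X^(a s) * (1 - 'X) * \prod_(t < k | t != s) (1 - 'X^(n t))
   - m%:R *: \prod_(t < k) (1 - 'X^(n t)).
have Qeval (z : K) : z != 1 -> (forall s, z ^+ n s != 1) ->
  (map_poly ratr Qr).[z] = (1 - z) * (\prod_(t < k) (1 - z ^+ n t)) *
     (\sum_(s < k) z ^+ a s / (1 - z ^+ n s) - m%:R / (1 - z)).
  move=> z1 zn.
  have ev t : (map_poly (ratr : rat -> K) (1 - 'X^(n t))).[z] = 1 - z ^+ n t.
    by rewrite rmorphB rmorph1 /= map_polyXn hornerD hornerN hornerXn hornerC.
  have E : (map_poly ratr Qr).[z] = \sum_(s < k) z ^+ a s * (1 - z) * \prod_(t < k | t != s) (1 - z ^+ n t)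
     - m%:R * \prod_(t < k) (1 - z ^+ n t).
    rewrite /Qr rmorphB rmorph_sum /= map_polyZ rmorph_prod /= hornerD hornerN hornerZ horner_sum horner_prod.
    rewrite ratr_nat; congr (_ - _ * _); last by apply: eq_bigr => t _; rewrite ev.
    apply: eq_bigr => s _; rewrite !rmorphM rmorph_prod /= map_polyXn !hornerM hornerXn horner_prod.
    rewrite rmorphB rmorph1 /= map_polyX hornerD hornerN hornerX hornerC.
    by congr (_ * _); apply: eq_bigr => t _; rewrite ev.
  rewrite E mulrBr mulr_sumr; congr (_ - _).
    apply: eq_bigr => s _; rewrite [\prod_(t < k) _](bigD1 s) //=.
    have e3 : 1 - z ^+ n s != 0 by rewrite subr_eq0 eq_sym zn.
    by field.
  have e3 : 1 - z != 0 by rewrite subr_eq0 eq_sym.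
  by field.
have good j : (0 < j < p)%N -> zeta ^+ j != 1 /\ forall s, (zeta ^+ j) ^+ n s != 1.
  move=> /andP[j0 jp]; split.
    by rewrite -(prim_order_dvd pz) gtnNdvd.
  move=> s; have /andP[ns nsp] := np s.
  by rewrite -exprM -(prim_order_dvd pz) Euclid_dvdM // !gtnNdvd.
have p1 := prime_gt1 pp.
have [g1 g2] := good 1%N p1.
rewrite expr1 in g1 g2.
have Qz : root (map_poly ratr Qr) zeta by rewrite /root Qeval // H subrr mulr0.
move=> j jp; have [h1 h2] := good j jp.
have cj : coprime j p.
  rewrite coprime_sym prime_coprime //; case/andP: jp => j0 jp; rewrite gtnNdvd //.
have := conj_root _ pp _ _ _ _ pz Qz cj; rewrite /root Qeval // mulf_eq0 mulf_eq0 subr_eq0 eq_sym (negPf h1) /=.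
rewrite prodf_seq_eq0 /= => /orP[/hasP[t _ /=]|]; first by rewrite subr_eq0 eq_sym (negPf (h2 t)).
by rewrite subr_eq0 => /eqP.
Qed.

Theorem corollary1p1 (R : realType) (m k : nat) (n a : 'I_k -> nat) (p : nat) :
  (0 < m)%N ->
  (forall s, 0 < n s)%N ->
  (forall s, a s < n s)%N ->
  prime p ->
  (card_S n < p)%N ->
  (exact_m_cover n a m <->
   \sum_(s < k) unit_exp R p (a s) / (1 - unit_exp R p (n s))
     = m%:R / (1 - unit_exp R p 1)).
Proof.
move=> m0 npos an pp Sp.
have uE j : unit_exp R p j = (unit_exp R p 1) ^+ j by rewrite !unit_expE expr1.
under eq_bigr do rewrite [unit_exp R p (a _)]uE [unit_exp R p (n _)]uE.
set z := unit_exp R p 1.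
have pz : p.-primitive_root z := unit_exp_prim R p (prime_gt0 pp).
set L := (\prod_(s < k) n s)%N.
have L0 : (0 < L)%N by apply: prodn_gt0.
have nL s : (n s %| L)%N by rewrite /L (bigD1 s) //= dvdn_mulr.
have np s : (n s < p)%N := leq_ltn_trans (n_le_card k n npos s) Sp.
have zn s : z ^+ n s != 1 by rewrite -(prim_order_dvd pz) gtnNdvd.
have z1 : z != 1 by have := prim_order_dvd pz 1; rewrite expr1 => <-; rewrite gtnNdvd // prime_gt1.
have zL : 1 - z ^+ L != 0.
  rewrite subr_eq0 eq_sym -(prim_order_dvd pz) /L Euclid_dvd_prod // big_has.
  by apply/hasPn => s _; rewrite gtnNdvd.
have z10 : 1 - z != 0 by rewrite subr_eq0 eq_sym.
split.
  move=> cov; have cm := (cover_iff k n a m L an L0 nL).1 cov.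
  apply: (mulfI zL); rewrite (key _ _ _ _ _ _ an nL zn) (key1 _ L _ m z1).
  by apply: eq_bigr => x _; rewrite cm.
move=> H.
have [k0|kpos] := posnP k.
  exfalso; move: H; rewrite big1 => [|s]; last by have := ltn_ord s; lia.
  move/esym/eqP; rewrite mulf_eq0 invr_eq0 (negPf z10) orbF pnatr_eq0 => /eqP m00.
  by move: m0; rewrite m00.
apply/(cover_iff k n a m L an L0 nL).
have np' s : (0 < n s < p)%N by rewrite npos np.
apply: (@backward _ k n a m p z (unit_exp R L 1) L (Ordinal kpos) pp pz (unit_exp_prim R L L0) npos an nL).
  exact: leq_ltn_trans (size_T k n npos L L0 nL) Sp.
exact: HF_lemma pp pz np' H.
Qed.
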